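(* Consider the randomized algorithm Channel-Screening in which, in every round, every active station, independently for each channel $\beta\in\{1,\dots,b\}$ and independently of all other random choices, transmits a message on channel $\beta$ with probability $k^{-\beta/b}$, until a message is heard on some channel. Let $t$ be a time step and let $1\le\beta\le b$ be such that $k^{(\beta-1)/b}\le |W(t)|\le k^{\beta/b}$, where $W(t)$ is the set of stations active at time step $t$. Then the probability that a message is heard on channel $\beta$ at time step $t$ (i.e. exactly one station transmits on $\beta$ at time step $t$) is at least $\frac{1}{2ek^{1/b}}$.
   Context: Model: multi-channel single-hop radio network with $b$ channels numbered $1,\dots,b$, synchronous rounds, no collision detection; a message on a channel in a round is heard by everybody iff exactly one station transmits on that channel in that round. At most $k$ stations are activated spontaneously at arbitrary times; $k$ is known to the stations, and only active stations execute the algorithm. *)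

(* Defs.v *)
From HB Require Import structures.
From mathcomp Require Import all_boot all_order all_algebra.
From mathcomp Require Import all_classical all_reals all_analysis.

Import Order.TTheory GRing.Theory Num.Theory.
Local Open Scope ring_scope.

(* Channels 1..b are represented by j : 'I_b, channel number j.+1.
   Stations active at time t: W(t) represented by 'I_n, n = |W(t)|. *)

Definition tx_prob (R : realType) (k b c : nat) : R :=
  (k%:R : R) `^ (- (c%:R / b%:R)).

(* One round's random choices: w i j = station i transmits on channel j.+1.
   All choices are independent; weight of an outcome is the product. *)
Definition outcome_weight (R : realType) (k b n : nat)
    (w : {ffun 'I_n -> {ffun 'I_b -> bool}}) : R :=
  \prod_(i < n) \prod_(j < b)
     (if w i j then tx_prob R k b j.+1 else 1 - tx_prob R k b j.+1).

Definition heard_prob (R : realType) (k b n : nat) (j : 'I_b) : R :=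
  \sum_(w : {ffun 'I_n -> {ffun 'I_b -> bool}} | #|[pred i : 'I_n | w i j]| == 1%N)
     outcome_weight R k b n w.

(* Main.v *)
Require Import Defs.
From HB Require Import structures.
From mathcomp Require Import all_boot all_order all_algebra.
From mathcomp Require Import all_classical all_reals all_analysis.
From mathcomp Require Import ring lra.
Import Order.TTheory GRing.Theory Num.Theory.
Local Open Scope ring_scope.
Section Comb.
Variable R : comNzRingType.

Lemma forall_natr (I : finType) (P : pred I) :
  ([forall i, P i])%:R = \prod_i ((P i)%:R : R).
Proof.
case: (boolP [forall i, P i]) => [/forallP H|].
  by rewrite big1 // => i _; rewrite H.
rewrite negb_forall => /existsP [i Hi].
by rewrite (bigD1 i) //= (negbTE Hi) mul0r.
Qed.

Lemma card1_sum (n : nat) (P : pred 'I_n) :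
  ((#|P| == 1%N)%:R : R) = \sum_i0 ([forall i, P i == (i == i0)])%:R.
Proof.
case: (pickP [pred i0 | [forall i, P i == (i == i0)]]) => [i0 /= Hi0 | none].
  rewrite (bigD1 i0) //= Hi0 big1 ?addr0.
    have -> : #|P| == 1%N. apply/card1P; exists i0 => i.
      by move/forallP: Hi0 => /(_ i) /eqP; rewrite !inE.
    by [].
  move=> i1 Hne; case: forallP => // /(_ i0).
  move/forallP: Hi0 => /(_ i0); rewrite eqxx => /eqP ->.
  by rewrite [i0 == i1]eq_sym (negbTE Hne).
rewrite big1; last by move=> i _; move: (none i) => /= ->.
case: card1P => // -[x Hx].
have : [forall i, P i == (i == x)].
  apply/forallP => i; move: (Hx i); by move/eqP.
by move=> H; move: (none x); rewrite /= H.
Qed.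

Lemma inner_sum (b : nat) (j : 'I_b) (wt : 'I_b -> bool -> R) (c : bool) :
  (forall j', wt j' true + wt j' false = 1) ->
  \sum_(v : {ffun 'I_b -> bool}) (v j == c)%:R * \prod_j' wt j' (v j') = wt j c.
Proof.
move=> H1.
pose G j' x := if j' == j then (x == c)%:R * wt j' x else wt j' x.
transitivity (\sum_(v : {ffun 'I_b -> bool}) \prod_j' G j' (v j')).
  apply: eq_bigr => v _.
  rewrite [RHS](bigD1 j) //= [in RHS]/G eqxx -mulrA; congr (_ * _).
  rewrite (bigD1 j) //=; congr (_ * _).
  by apply: eq_bigr => j' /negbTE Hj; rewrite /G Hj.
rewrite -(bigA_distr_bigA (fun j' x => G j' x)) (bigD1 j) //= [X in _ * X]big1 ?mulr1.
  by rewrite big_bool /G eqxx; clear G; case: c => /=; rewrite ?mul1r ?mul0r ?addr0 ?add0r.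
by move=> j' /negbTE Hj; rewrite big_bool /G Hj /= H1.
Qed.

Lemma heard_gen (n b : nat) (j : 'I_b) (wt : 'I_b -> bool -> R) :
  (forall j', wt j' true + wt j' false = 1) ->
  \sum_(w : {ffun 'I_n -> {ffun 'I_b -> bool}} | #|[pred i : 'I_n | w i j]| == 1%N)
     \prod_(i < n) \prod_(j' < b) wt j' (w i j')
  = n%:R * wt j true * (wt j false) ^+ n.-1.
Proof.
move=> H1.
have E (bb : bool) (x : R) : (if bb then x else 0) = bb%:R * x.
  by case: bb; rewrite ?mul1r ?mul0r.
rewrite big_mkcond /=.
under eq_bigr => w _ do rewrite E card1_sum mulr_suml.
rewrite exchange_big /=.
transitivity (\sum_(i0 < n) (wt j true * (wt j false) ^+ n.-1)); last first.
  by rewrite sumr_const card_ord -mulrA mulr_natl.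
apply: eq_big => // i0 _.
under eq_bigr => w _ do rewrite forall_natr -big_split /=.
rewrite -(bigA_distr_bigA (fun (i : 'I_n) (v : {ffun 'I_b -> bool}) => (v j == (i == i0))%:R * \prod_j' wt j' (v j'))).
under eq_bigr => i _ do rewrite inner_sum //.
rewrite (bigD1 i0) //= eqxx; congr (_ * _).
rewrite (eq_bigr (fun _ => wt j false)); last by move=> i /negbTE ->.
by rewrite prodr_const cardC1 card_ord.
Qed.
End Comb.
Lemma pow_bound (R : realType) (n : nat) (p : R) : (0 < n)%N -> 0 <= p ->
  n%:R * p <= 1 -> expR (-1) <= (1 - p) ^+ n.-1.
Proof.
case: n => // m _ p0 /=.
case: m => [|m] Hp.
  by rewrite expr0 expR_le1 lerN10.
set M : R := m.+1%:R.
have M0 : 0 < M by rewrite ltr0n.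
set y := M^-1.
have My : M * y = 1 by rewrite /y mulfV // gt_eqF.
have y0 : 0 <= y by rewrite invr_ge0 ltW.
have HS : m.+2%:R = M + 1 by rewrite /M -natr1.
rewrite HS in Hp.
have Hx := expR_ge1Dx y.
have x0 : 0 < expR y := expR_gt0 y.
have H1p : 0 <= 1 - p by nra.
have key : expR (- y) <= 1 - p.
  rewrite expRN -[leLHS]mul1r ler_pdivrMr //.
  apply: le_trans (ler_wpM2l H1p Hx).
  nra.
have -> : -1 = M * (- y) by rewrite mulrN My.
rewrite expRM_natl.
apply: lerXn2r => //; rewrite ?nnegrE //; apply/ltW/expR_gt0.
Qed.
Lemma final (R : realType) (k b n : nat) (j : 'I_b) (pb : R)
  (Hpb : pb = (k%:R : R) `^ (- ((nat_of_ord j).+1%:R / b%:R))) :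
  (1 <= k)%N ->
  (k%:R : R) `^ ((nat_of_ord j)%:R / b%:R) <= n%:R ->
  (n%:R : R) <= (k%:R : R) `^ ((nat_of_ord j).+1%:R / b%:R) ->
  (forall p : R, (0 < n)%N -> 0 <= p -> n%:R * p <= 1 -> expR (-1) <= (1 - p) ^+ n.-1) ->
  1 / (2 * expR 1 * (k%:R : R) `^ (1 / b%:R)) <= n%:R * pb * (1 - pb) ^+ n.-1.
Proof.
move=> k1 Hlo Hhi PB.
set K : R := k%:R.
have K0 : 0 < K by rewrite /K ltr0n.
have Kn0 : K != 0 by rewrite gt_eqF.
have b0 : (0 < b)%N by apply: leq_ltn_trans (ltn_ord j).
have B0 : (b%:R : R) != 0 by rewrite pnatr_eq0 -lt0n.
set c := K `^ (1 / b%:R).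
have c0 : 0 < c by apply: powR_gt0.
have p0 : 0 <= pb by rewrite Hpb powR_ge0.
have n0 : (0 < n)%N.
  rewrite -(ltr0n R); apply: lt_le_trans Hlo; exact: powR_gt0.
have Hnp1 : n%:R * pb <= 1.
  apply: le_trans (ler_wpM2r p0 Hhi) _.
  rewrite Hpb -powRD; last by apply/implyP.
  by rewrite subrr powRr0.
have Hnp2 : c^-1 <= n%:R * pb.
  apply: le_trans (ler_wpM2r p0 Hlo).
  rewrite Hpb -powRD; last by apply/implyP.
  rewrite /c -powRN /K.
  have -> : (j%:R / b%:R - j.+1%:R / b%:R : R) = - (1 / b%:R).
    by rewrite -natr1; field.
  by [].
have He := PB pb n0 p0 Hnp1.
have e0 : 0 < expR (-1 : R) := expR_gt0 _.
have ic0 : 0 <= c^-1 by rewrite invr_ge0 ltW.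
have Hm := ler_pM ic0 (ltW e0) Hnp2 He.
apply: le_trans Hm.
have -> : 1 / (2 * expR 1 * c) = (c^-1 * expR (-1)) / 2.
  by rewrite expRN; field; rewrite gt_eqF ?expR_gt0 // gt_eqF.
have : 0 < c^-1 * expR (-1) by apply: mulr_gt0 => //; rewrite invr_gt0.
lra.
Qed.

Theorem lemma3 (R : realType) (k b n : nat) (j : 'I_b) :
  (1 <= k)%N ->
  (k%:R : R) `^ ((nat_of_ord j)%:R / b%:R) <= n%:R ->
  (n%:R : R) <= (k%:R : R) `^ ((nat_of_ord j).+1%:R / b%:R) ->
  1 / (2 * expR 1 * (k%:R : R) `^ (1 / b%:R)) <= heard_prob R k b n j.
Proof.
move=> k1 Hlo Hhi.
pose wt (j' : 'I_b) (x : bool) : R :=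
  if x then tx_prob R k b j'.+1 else 1 - tx_prob R k b j'.+1.
have -> : heard_prob R k b n j = n%:R * wt j true * (wt j false) ^+ n.-1.
  rewrite -(@heard_gen R n b j wt); last by move=> j'; rewrite /wt addrC subrK.
  rewrite /heard_prob /outcome_weight /wt.
  apply: eq_bigr => w _; apply: eq_bigr => i _; apply: eq_bigr => j' _.
  by case: (w i j').
apply: (@final R k b n j (tx_prob R k b j.+1)).
- by rewrite /tx_prob.
- exact: k1.
- exact: Hlo.
- exact: Hhi.
- move=> p; exact: pow_bound.
Qed.
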